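(* For every positive integer $r$ there is a ReLU network $f_s^r:\mathbb{R}\to\mathbb{R}$ all of whose weights lie in $\{\frac12,-\frac12\}$ such that: (i) $f_s^r(0)=0$; (ii) $\sup_{x\in[0,1]}|f_s^r(x)-x^2|\le 2^{-2(r+1)}$; (iii) its depth is $\mathcal{O}(r)$; (iv) its width is bounded by a constant independent of $r$; (v) its number of weights is $\mathcal{O}(r)$.
   Context: A ReLU network is a feedforward network with activation $\sigma(x)=\max(0,x)$ in which each unit connects only to units in the next layer; depth is the number of layers and width the maximum number of units in a layer. *)

(* Defs.v *)
From HB Require Import structures.
From mathcomp Require Import all_boot all_order all_algebra.
Set Implicit Arguments. Unset Strict Implicit. Unset Printing Implicit Defensive.
Import Order.TTheory GRing.Theory Num.Theory.
Local Open Scope ring_scope.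

(* A zero entry of W / b means "no connection / no bias" (not a weight). *)
Inductive relu_net (R : Type) : nat -> nat -> Type :=
| NOut (m n : nat) (W : 'M[R]_(n, m)) (b : 'cV[R]_n) : relu_net R m n
| NHid (m k n : nat) (W : 'M[R]_(k, m)) (b : 'cV[R]_k) (N : relu_net R k n)
    : relu_net R m n.

Section Nets.
Variable R : realDomainType.

Definition relu (x : R) : R := Num.max x 0.
Definition relu_vec (k : nat) (v : 'cV[R]_k) : 'cV[R]_k := map_mx relu v.

Fixpoint net_eval (m n : nat) (N : relu_net R m n) : 'cV[R]_m -> 'cV[R]_n :=
  match N with
  | NOut _ _ W b => fun x => W *m x + b
  | NHid _ _ _ W b N' => fun x => net_eval N' (relu_vec (W *m x + b))
  end.

Definition net_fun (N : relu_net R 1 1) (x : R) : R := net_eval N (x%:M) 0 0.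

Fixpoint depth (m n : nat) (N : relu_net R m n) : nat :=
  match N with
  | NOut _ _ _ _ => 1
  | NHid _ _ _ _ _ N' => (depth N').+1
  end.

Fixpoint width (m n : nat) (N : relu_net R m n) : nat :=
  match N with
  | NOut m n _ _ => maxn m n
  | NHid m k _ _ _ N' => maxn m (width N')
  end.

Definition nnz_mx (p q : nat) (A : 'M[R]_(p, q)) : nat :=
  #|[set ij : 'I_p * 'I_q | A ij.1 ij.2 != 0]|.

Fixpoint num_weights (m n : nat) (N : relu_net R m n) : nat :=
  match N with
  | NOut _ _ W b => nnz_mx W + nnz_mx b
  | NHid _ _ _ W b N' => nnz_mx W + nnz_mx b + num_weights N'
  end.

Definition half_param (x : R) : bool := [|| x == 0, x == 2^-1 | x == - 2^-1].

Definition mx_half (p q : nat) (A : 'M[R]_(p, q)) : bool :=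
  [forall i, forall j, half_param (A i j)].

Fixpoint weights_in_half (m n : nat) (N : relu_net R m n) : bool :=
  match N with
  | NOut _ _ W b => mx_half W && mx_half b
  | NHid _ _ _ W b N' => [&& mx_half W, mx_half b & weights_in_half N']
  end.

End Nets.

(* Main.v *)
Require Import Defs.
From mathcomp Require Import all_boot all_order all_algebra.
From mathcomp Require Import reals.
From mathcomp Require Import ring lra zify.
Import Order.TTheory GRing.Theory Num.Theory.
Local Open Scope ring_scope.

Section Proof.
Variable R : realType.

Local Notation cst := const_mx.
Definition hf : R := 2^-1.

Lemma mulcc m n p (a c : R) :
  (cst a : 'M[R]_(m, n)) *m (cst c : 'M[R]_(n, p)) = cst (a * c *+ n).
Proof.
apply/matrixP => i j; rewrite !mxE.
under eq_bigr do rewrite !mxE.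
by rewrite sumr_const card_ord.
Qed.

Lemma addcc m n (a c : R) : (cst a : 'M[R]_(m, n)) + cst c = cst (a + c).
Proof. by apply/matrixP => i j; rewrite !mxE. Qed.

Lemma scal1 (x : R) : (x%:M : 'M[R]_1) = cst x.
Proof. by apply/matrixP => i j; rewrite !mxE !ord1 eqxx. Qed.

Lemma relu_id (a : R) : 0 <= a -> relu a = a.
Proof. by move=> h; rewrite /relu; apply/max_idPl. Qed.

Lemma relu0 (a : R) : a <= 0 -> relu a = 0.
Proof. by move=> h; rewrite /relu; apply/max_idPr. Qed.

Lemma hfn (a : R) n : hf * a *+ n = a * n%:R / 2.
Proof. by rewrite -mulr_natr /hf; field. Qed.

Lemma nhfn (a : R) n : - hf * a *+ n = - (a * n%:R / 2).
Proof. by rewrite mulNr mulNrn hfn. Qed.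

Lemma mul22 (a : R) : a * 2 / 2 = a.
Proof. by field. Qed.

Definition ghat (y : R) : R := 2 * y - 4 * relu (y - hf).

Lemma ghat_prop (y : R) : 0 <= y <= 1 ->
  0 <= ghat y <= 1 /\ y - y ^+ 2 = ghat y / 4 + (ghat y - ghat y ^+ 2) / 4.
Proof.
move=> /andP [h0 h1]; rewrite /ghat /hf.
have [hl|hl] := lerP (y - 2^-1) 0.
  rewrite relu0 //; split; [apply/andP; split|]; rewrite ?expr2; lra.
rewrite relu_id; last lra.
split; [apply/andP; split|]; rewrite ?expr2; lra.
Qed.

Definition W1 : 'M[R]_(4 + (8 + 8), 2 + 2) :=
  col_mx (row_mx (cst hf) (cst 0))
         (col_mx (row_mx (cst hf) (cst 0)) (row_mx (cst 0) (cst hf))).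
Definition b1 : 'cV[R]_(4 + (8 + 8)) := col_mx (cst 0) (col_mx (cst (- hf)) (cst 0)).
Definition W2 : 'M[R]_(2 + 2, 4 + (8 + 8)) :=
  col_mx (row_mx (cst hf) (row_mx (cst (- hf)) (cst 0)))
         (row_mx (cst (- hf)) (row_mx (cst hf) (cst hf))).
Definition b2 : 'cV[R]_(2 + 2) := cst 0.

Definition block (N : relu_net R (2 + 2) 1) : relu_net R (2 + 2) 1 :=
  NHid W1 b1 (NHid W2 b2 N).

Definition St (y b : R) : 'cV[R]_(2 + 2) := col_mx (cst y) (cst b).

Lemma L1E (y b : R) : 0 <= y -> 0 <= b ->
  relu_vec (W1 *m St y b + b1) = col_mx (cst y) (col_mx (cst (relu (y - hf))) (cst b)).
Proof.
move=> y0 b0.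
rewrite /W1 /St /b1 !mul_col_mx !mul_row_col !mulcc !addcc !add_col_mx !addcc.
rewrite /relu_vec !map_col_mx !map_const_mx.
by rewrite ?mul0r ?mul0rn ?mulr0n ?addr0 ?add0r !hfn !mul22 [relu y]relu_id // [relu b]relu_id.
Qed.

Lemma L2E (y v b : R) : 0 <= 2 * y - 4 * v -> 0 <= 4 * b - (2 * y - 4 * v) ->
  relu_vec (W2 *m col_mx (cst y) (col_mx (cst v) (cst b)) + b2)
  = St (2 * y - 4 * v) (4 * b - (2 * y - 4 * v)).
Proof.
move=> h1 h2.
rewrite /W2 /St /b2 -(@col_mx_const _ 2 2) !mul_col_mx !mul_row_col !mulcc !addcc !add_col_mx !addcc.
rewrite /relu_vec !map_col_mx !map_const_mx.
rewrite ?mul0r ?mul0rn ?mulr0n ?addr0 ?add0r !nhfn !hfn.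
congr (col_mx (cst _) (cst _)); rewrite relu_id; try lra; f_equal; lra.
Qed.

Lemma blockE N (y b : R) : 0 <= y <= 1 -> 0 <= b -> 0 <= 4 * b - ghat y ->
  net_eval (block N) (St y b) = net_eval N (St (ghat y) (4 * b - ghat y)).
Proof.
move=> hy hb hb'; have [/andP [g0 g1] _] := ghat_prop y hy.
move: hy => /andP [y0 y1].
rewrite /= L1E // L2E //.
Qed.

Lemma p4 k : (4 : R) ^+ k != 0.
Proof. by rewrite expf_neq0 // pnatr_eq0. Qed.

Fixpoint Ff (k : nat) (y : R) : R :=
  if k is k'.+1 then (ghat y + Ff k' (ghat y)) / 4 else 0.

Definition gi k y := iter k ghat y.

Lemma Ff_back k y : Ff k.+1 y = Ff k y + gi k.+1 y / 4 ^+ k.+1.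
Proof.
elim: k y => [|k IH] y.
  by rewrite /= /gi /= expr1; field.
have e1 : Ff k.+2 y = (ghat y + Ff k.+1 (ghat y)) / 4 by [].
have e2 : Ff k.+1 y = (ghat y + Ff k (ghat y)) / 4 by [].
have e3 : gi k.+2 y = gi k.+1 (ghat y) by rewrite /gi iterSr.
rewrite e1 e2 e3 IH !exprS.
field; exact: p4.
Qed.

Lemma gi_bd k y : 0 <= y <= 1 -> 0 <= gi k y <= 1.
Proof.
elim: k => [//|k IH] hy.
by rewrite /gi iterS; have [] := ghat_prop _ (IH hy).
Qed.

Lemma Ff_bd k y : 0 <= y <= 1 ->
  0 <= Ff k y /\ Ff k y <= y - y ^+ 2 /\ y - y ^+ 2 - Ff k y <= (4 ^+ k.+1)^-1.
Proof.
elim: k y => [|k IH] y hy.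
  move: hy => /andP [h0 h1]; rewrite /= expr1 expr2.
  have hs : 0 <= (y - 2^-1) * (y - 2^-1) by rewrite -expr2 sqr_ge0.
  split; [lra|split; nra].
have [/andP [g0 g1] hE] := ghat_prop y hy.
have [i0 [i1 i2]] := IH (ghat y) (introT andP (conj g0 g1)).
have e : (4 ^+ k.+2 : R)^-1 = (4 ^+ k.+1)^-1 / 4.
  by rewrite [X in X^-1]exprS invfM mulrC.
rewrite /= e hE; move: i0 i1 i2 g0 g1.
generalize (ghat y ^+ 2) (Ff k (ghat y)) ((4 ^+ k.+1 : R)^-1) (ghat y) => w F q z.
move=> i0 i1 i2 g0 g1; split; [lra|split; lra].
Qed.

Lemma iterE N k j x : 0 <= x <= 1 ->
  net_eval (iter k block N) (St (gi j x) (4 ^+ j * (x - Ff j x)))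
  = net_eval N (St (gi (k + j) x) (4 ^+ (k + j) * (x - Ff (k + j) x))).
Proof.
move=> hx; elim: k j => [//|k IH] j.
rewrite iterS blockE.
- have -> : 4 * (4 ^+ j * (x - Ff j x)) - ghat (gi j x)
           = 4 ^+ j.+1 * (x - Ff j.+1 x).
    rewrite Ff_back /gi iterS exprS; field.
    exact: p4.
  by rewrite -/(gi j.+1 x) IH (addnS k j) (addSn k j).
- exact: gi_bd.
- have [h0 [h1 _]] := Ff_bd j x hx.
  apply: mulr_ge0; [exact: exprn_ge0|].
  move: hx => /andP [x0 x1]; rewrite expr2 in h1; nra.
- have -> : 4 * (4 ^+ j * (x - Ff j x)) - ghat (gi j x)
           = 4 ^+ j.+1 * (x - Ff j.+1 x).
    rewrite Ff_back /gi iterS exprS; field.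
    exact: p4.
  have [h0 [h1 _]] := Ff_bd j.+1 x hx.
  apply: mulr_ge0; [exact: exprn_ge0|].
  move: hx => /andP [x0 x1]; rewrite expr2 in h1; nra.
Qed.

Lemma hidE m k (W : 'M[R]_(k, m)) b (N : relu_net R k 1) x :
  net_eval (NHid W b N) x = net_eval N (relu_vec (W *m x + b)).
Proof. by []. Qed.

Definition WA : 'M[R]_(4, 1) := cst hf.
Definition WB : 'M[R]_(2 + 2, 4) := col_mx (cst hf) (cst hf).

Lemma inE (x : R) : 0 <= x ->
  relu_vec (WB *m relu_vec (WA *m x%:M + cst 0) + cst 0) = St x x.
Proof.
move=> x0.
rewrite scal1 /WA mulcc addcc /relu_vec map_const_mx [hf * x *+ 1 + 0]addr0 mulr1n.
rewrite relu_id; last by rewrite /hf; lra.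
rewrite /WB /St -(@col_mx_const _ 2 2) mul_col_mx !mulcc add_col_mx !addcc.
rewrite map_col_mx !map_const_mx !addr0 hfn relu_id; last by rewrite /hf; lra.
by congr (col_mx (cst _) (cst _)); rewrite /hf; field.
Qed.

Fixpoint halv (k : nat) : relu_net R 1 1 :=
  if k is k'.+1 then NHid (cst hf) (cst 0) (halv k') else NOut (cst hf) (cst 0).

Lemma halvE k (p : R) : 0 <= p -> net_eval (halv k) (cst p) = cst (p / 2 ^+ k.+1).
Proof.
elim: k p => [|k IH] p p0.
  by rewrite /= mulcc addcc addr0 mulr1n expr1 /hf mulrC.
rewrite /= mulcc addcc addr0 mulr1n /relu_vec map_const_mx relu_id; last by rewrite /hf mulr_ge0 // invr_ge0 ler0n.
rewrite IH; last by rewrite /hf mulr_ge0 // invr_ge0 ler0n.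
congr (cst _); rewrite [2 ^+ k.+2]exprS /hf. field.
by rewrite expf_neq0 // pnatr_eq0.
Qed.

Definition Wsel : 'M[R]_(1, 2 + 2) := row_mx (cst 0) (cst hf).
Definition tail (r' : nat) : relu_net R (2 + 2) 1 := NHid Wsel (cst 0) (halv (2 * r').+1).

Lemma tailE r' (y b : R) : 0 <= b ->
  net_eval (tail r') (St y b) = cst (b / 2 ^+ (2 * r').+2).
Proof.
move=> b0.
rewrite /= /Wsel /St mul_row_col !mulcc !addcc /relu_vec map_const_mx
  mul0r mul0rn add0r !addr0 hfn mul22 relu_id //.
rewrite mulcc map_const_mx mulr1n relu_id; last by rewrite /hf mulr_ge0 // invr_ge0 ler0n.
rewrite halvE; last by rewrite /hf mulr_ge0 // invr_ge0 ler0n.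
congr (cst _); rewrite [2 ^+ (2 * r').+2]exprS /hf; field.
by rewrite expf_neq0 // pnatr_eq0.
Qed.

Definition net (r' : nat) : relu_net R 1 1 :=
  NHid WA (cst 0) (NHid WB (cst 0) (iter r'.+1 block (tail r'))).

Lemma netE r' (x : R) : 0 <= x <= 1 -> net_fun (net r') x = x - Ff r'.+1 x.
Proof.
move=> hx; have x0 : 0 <= x by case/andP: hx.
rewrite /net_fun /net hidE hidE inE //.
have -> : St x x = St (gi 0 x) (4 ^+ 0 * (x - Ff 0 x)) by rewrite expr0 mul1r subr0.
rewrite iterE // addn0 tailE.
  rewrite mxE.
  have -> : (2 : R) ^+ (2 * r').+2 = 4 ^+ r'.+1.
    rewrite (_ : (2 * r').+2 = 2 * r'.+1)%N; last lia.
    by rewrite exprM expr2 -natrM.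
  by field; rewrite expf_neq0 // pnatr_eq0.
have [h0 [h1 _]] := Ff_bd r'.+1 x hx.
apply: mulr_ge0; [exact: exprn_ge0|].
move: hx => /andP [_ x1]; rewrite expr2 in h1; nra.
Qed.

Lemma half_cst p q (a : R) : half_param a -> mx_half (cst a : 'M[R]_(p, q)).
Proof. by move=> h; apply/forallP => i; apply/forallP => j; rewrite mxE. Qed.

Lemma half_col p1 p2 q (A : 'M[R]_(p1, q)) (B : 'M[R]_(p2, q)) :
  mx_half A -> mx_half B -> mx_half (col_mx A B).
Proof.
move=> /forallP hA /forallP hB; apply/forallP => i; apply/forallP => j.
rewrite -[i]splitK; case: split => k /=; [rewrite col_mxEu; exact: (forallP (hA k))
                          | rewrite col_mxEd; exact: (forallP (hB k))].
Qed.

Lemma half_row p q1 q2 (A : 'M[R]_(p, q1)) (B : 'M[R]_(p, q2)) :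
  mx_half A -> mx_half B -> mx_half (row_mx A B).
Proof.
move=> /forallP hA /forallP hB; apply/forallP => i; apply/forallP => j.
rewrite -[j]splitK; case: split => k /=; [rewrite row_mxEl; exact: (forallP (hA i))
                          | rewrite row_mxEr; exact: (forallP (hB i))].
Qed.

Lemma hp0 : half_param (0 : R). Proof. by apply/orP; left. Qed.
Lemma hp1 : half_param hf. Proof. by apply/orP; right; apply/orP; left. Qed.
Lemma hp2 : half_param (- hf). Proof. by apply/orP; right; apply/orP; right. Qed.

Ltac halfs := repeat first [ apply: half_col | apply: half_row | apply: half_cst
                           | exact: hp0 | exact: hp1 | exact: hp2 ].

Lemma wh_iter k N : weights_in_half N -> weights_in_half (iter k block N).
Proof.
move=> h; elim: k => [//|k IH]; rewrite iterS /= IH andbT.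
apply/and4P; split; rewrite /W1 /b1 /W2 /b2; halfs.
Qed.

Lemma wh_halv k : weights_in_half (halv k).
Proof. elim: k => [|k IH] /=; first by apply/andP; split; halfs.
by rewrite IH andbT; apply/andP; split; halfs. Qed.

Lemma wh_net r' : weights_in_half (net r').
Proof.
have whE m k (W : 'M[R]_(k, m)) b (N : relu_net R k 1) :
  weights_in_half (NHid W b N) = [&& mx_half W, mx_half b & weights_in_half N] by [].
rewrite /net whE whE wh_iter; last first.
  by rewrite /tail whE wh_halv andbT; apply/andP; split; rewrite /Wsel; halfs.
rewrite andbT; apply/and4P; split; rewrite /WA /WB; halfs.
Qed.

Lemma depth_iter k N : depth (iter k block N) = (2 * k + depth N)%N.
Proof. elim: k => [//|k IH]; rewrite iterS /= IH; lia. Qed.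

Lemma depth_halv k : depth (halv k) = k.+1.
Proof. by elim: k => [//|k IH] /=; rewrite IH. Qed.

Lemma depth_net r' : depth (net r') = (4 * r' + 7)%N.
Proof. rewrite /net /= depth_iter /= depth_halv; lia. Qed.

Lemma width_iter k N : (width N <= 20)%N -> (width (iter k block N) <= 20)%N.
Proof.
move=> h; elim: k => [//|k IH]; rewrite iterS /=.
by rewrite !geq_max /= IH.
Qed.

Lemma width_halv k : (width (halv k) <= 1)%N.
Proof. by elim: k => [//|k IH] /=; rewrite geq_max IH. Qed.

Lemma width_net r' : (width (net r') <= 20)%N.
Proof.
rewrite /net /= !geq_max /= width_iter //= geq_max /=.
by rewrite geq_max /=; apply: leq_trans (width_halv _) _.
Qed.

Lemma nnz_le p q (A : 'M[R]_(p, q)) : (nnz_mx A <= p * q)%N.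
Proof. by rewrite /nnz_mx; apply: leq_trans (max_card _) _; rewrite card_prod !card_ord. Qed.

Lemma nwOut m n (W : 'M[R]_(n, m)) b : (num_weights (NOut W b) <= n * m + n * 1)%N.
Proof. by rewrite /=; apply: leq_add; apply: nnz_le. Qed.

Lemma nwHid m k n (W : 'M[R]_(k, m)) b (N : relu_net R k n) :
  (num_weights (NHid W b N) <= k * m + k * 1 + num_weights N)%N.
Proof. by rewrite /=; apply: leq_add => //; apply: leq_add; apply: nnz_le. Qed.

Lemma nw_iter k N : (num_weights (iter k block N) <= 184 * k + num_weights N)%N.
Proof.
elim: k => [//|k IH]; rewrite iterS.
have h1 := @nwHid _ _ _ W1 b1 (NHid W2 b2 (iter k block N)).
have h2 := @nwHid _ _ _ W2 b2 (iter k block N).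
change (num_weights (NHid W1 b1 (NHid W2 b2 (iter k block N))) <= 184 * k.+1 + num_weights N)%N; lia.
Qed.

Lemma nw_halv k : (num_weights (halv k) <= 2 * k.+1)%N.
Proof.
elim: k => [|k IH].
  have := @nwOut _ _ (cst hf : 'M[R]_(1,1)) (cst 0) => h.
  change (num_weights (NOut (cst hf : 'M[R]_(1,1)) (cst (0:R)%R : 'cV[R]_1)) <= 2 * 1)%N; exact: h.
have := @nwHid _ _ _ (cst hf : 'M[R]_(1,1)) (cst 0) (halv k) => h.
change (num_weights (NHid (cst hf : 'M[R]_(1,1)) (cst (0:R)%R : 'cV[R]_1) (halv k)) <= 2 * k.+2)%N; apply: leq_trans h _; lia.
Qed.

Lemma nw_net r' : (num_weights (net r') <= 300 * r'.+1)%N.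
Proof.
have h1 := nw_iter r'.+1 (tail r').
have h2 := nw_halv (2 * r').+1.
have h3 := @nwHid _ _ _ Wsel (cst 0) (halv (2 * r').+1).
have h4 := @nwHid _ _ _ WB (cst 0) (iter r'.+1 block (tail r')).
have h5 := @nwHid _ _ _ WA (cst 0) (NHid WB (cst 0) (iter r'.+1 block (tail r'))).
have h6 := leq_trans h5 (leq_add (leqnn _) h4).
have h7 := leq_trans h6 (leq_add (leqnn _) (leq_add (leqnn _) h1)).
have h8 := leq_trans h7 (leq_add (leqnn _) (leq_add (leqnn _) (leq_add (leqnn _) h3))).
have h9 := leq_trans h8 (leq_add (leqnn _) (leq_add (leqnn _) (leq_add (leqnn _) (leq_add (leqnn _) h2)))).
apply: leq_trans h9 _; lia.
Qed.

End Proof.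

Theorem proposition1 (R : realType) :
  exists (Cd Cw Cn : nat),
  forall r : nat, (0 < r)%N ->
  exists N : relu_net R 1 1,
    weights_in_half N /\
    net_fun N 0 = 0 /\
    (forall x : R, 0 <= x <= 1 ->
       `|net_fun N x - x ^+ 2| <= (2 : R) ^- (2 * (r + 1))) /\
    (depth N <= Cd * r)%N /\
    (width N <= Cw)%N /\
    (num_weights N <= Cn * r)%N.
Proof.
exists 7%N, 20%N, 300%N => -[//|r'] _.
exists (net R r'); split; first exact: wh_net.
split.
  have h01 : 0 <= (0 : R) <= 1 by apply/andP; split; [exact: lexx | exact: ler01].
  rewrite netE //.
  have [h0 [h1 _]] := @Ff_bd R r'.+1 0 h01.
  rewrite expr2 mulr0 subr0 in h1.
  rewrite sub0r; apply/eqP; rewrite oppr_eq0 eq_le h1 h0 //.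
split.
  move=> x hx; rewrite netE //.
  have [h0 [h1 h2]] := @Ff_bd R r'.+1 x hx.
  have -> : (2 : R) ^- (2 * (r'.+1 + 1)) = (4 ^+ r'.+2)^-1.
    by rewrite exprM addn1 expr2 -natrM.
  rewrite (_ : x - Ff R r'.+1 x - x ^+ 2 = x - x ^+ 2 - Ff R r'.+1 x); last by ring.
  rewrite ger0_norm //; lra.
split; first by rewrite depth_net; lia.
split; first exact: width_net.
exact: nw_net.
Qed.
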